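(* Let $R$ be a commutative Noetherian ring with $\operatorname{Spec}(R)$ connected, and let $\phi\colon\mathbb{Z}\to\mathsf{P}(\operatorname{Spec}(R))$ be an sp-filtration satisfying the weak Cousin condition which is neither the constant filtration with value $\varnothing$ nor the constant filtration with value $\operatorname{Spec}(R)$. Then: (1) $\bigcap_{i\in\mathbb{Z}}\phi(i)=\varnothing$; (2) there exists $j_0\in\mathbb{Z}$ with $\phi(j_0)=\operatorname{Spec}(R)$; (3) if $R$ has finite Krull dimension, there exists $k\in\mathbb{Z}$ with $\phi(k)=\varnothing$.
   Context: An sp-filtration is a decreasing map $\phi\colon\mathbb{Z}\to\mathsf{P}(\operatorname{Spec}(R))$ whose values are subsets stable under specialization. $\phi$ satisfies the weak Cousin condition if for every $j\in\mathbb{Z}$ and primes ${\mathfrak p}\subsetneq{\mathfrak q}$ with no prime strictly between them, ${\mathfrak q}\in\phi(j)$ implies ${\mathfrak p}\in\phi(j-1)$. *)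

(* Defs.v *)
From mathcomp Require Import all_boot all_order all_algebra.
Set Implicit Arguments. Unset Strict Implicit. Unset Printing Implicit Defensive.
Import Order.TTheory GRing.Theory Num.Theory.
Local Open Scope ring_scope.

Section CommAlg.
Variable R : comRingType.

Definition is_ideal (I : R -> Prop) : Prop :=
  [/\ I 0, (forall x y, I x -> I y -> I (x + y)) & (forall r x, I x -> I (r * x))].

Definition is_prime_ideal (P : R -> Prop) : Prop :=
  [/\ is_ideal P, ~ P 1 & (forall a b, P (a * b) -> P a \/ P b)].

Definition Spec := {P : R -> Prop | is_prime_ideal P}.

Definition prime_le (p q : Spec) : Prop := forall x, proj1_sig p x -> proj1_sig q x.
Definition prime_lt (p q : Spec) : Prop :=
  prime_le p q /\ exists x, proj1_sig q x /\ ~ proj1_sig p x.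

Definition noetherian : Prop :=
  forall I : nat -> (R -> Prop),
    (forall n, is_ideal (I n)) ->
    (forall n x, I n x -> I n.+1 x) ->
    exists n, forall m, (n <= m)%N -> forall x, I m x <-> I n x.

Definition V (I : R -> Prop) (p : Spec) : Prop := forall x, I x -> proj1_sig p x.

(* Spec R is connected in the Zariski topology: it is not the disjoint
   union of two nonempty closed subsets (closed sets are exactly the V(I)). *)
Definition spec_connected : Prop :=
  forall I J : R -> Prop, is_ideal I -> is_ideal J ->
    (forall p, V I p \/ V J p) ->
    (forall p, ~ (V I p /\ V J p)) ->
    (forall p, ~ V I p) \/ (forall p, ~ V J p).

Definition finite_krull_dim : Prop :=
  exists n : nat, forall (m : nat) (c : nat -> Spec),
    (forall k, (k < m)%N -> prime_lt (c k) (c k.+1)) -> (m <= n)%N.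

Definition sp_stable (S : Spec -> Prop) : Prop :=
  forall p q, S p -> prime_le p q -> S q.

Definition sp_filtration (phi : int -> Spec -> Prop) : Prop :=
  (forall i, sp_stable (phi i)) /\
  (forall i j p, i <= j -> phi j p -> phi i p).

Definition weak_cousin (phi : int -> Spec -> Prop) : Prop :=
  forall (j : int) (p q : Spec),
    prime_lt p q ->
    (forall r : Spec, ~ (prime_lt p r /\ prime_lt r q)) ->
    phi j q -> phi (j - 1) p.

End CommAlg.

(* Main.v *)
Require Import Defs.
From mathcomp Require Import all_boot all_order all_algebra.
From mathcomp Require Import ring.
From Stdlib Require Import Classical ClassicalEpsilon.
Import Order.TTheory GRing.Theory Num.Theory.
Local Open Scope ring_scope.
Set Implicit Arguments. Unset Strict Implicit. Unset Printing Implicit Defensive.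

Lemma choice_nat (A : Type) (P : nat -> A -> Prop) :
  (forall i, exists a, P i a) -> exists f : nat -> A, forall i, P i (f i).
Proof.
move=> H; exists (fun i => proj1_sig (constructive_indefinite_description _ (H i))).
by move=> i; exact: (proj2_sig (constructive_indefinite_description _ (H i))).
Qed.

Section Basics.
Variable R : comRingType.
Implicit Types (I J P : R -> Prop).

Definition sub I J := forall z, I z -> J z.

Lemma id0 I : is_ideal I -> I 0. Proof. by case. Qed.
Lemma idD I a b : is_ideal I -> I a -> I b -> I (a + b).
Proof. by case=> _ H _; apply: H. Qed.
Lemma idMl I c a : is_ideal I -> I a -> I (c * a).
Proof. by case=> _ _ H; apply: H. Qed.
Lemma idMr I c a : is_ideal I -> I a -> I (a * c).
Proof. by rewrite mulrC; apply: idMl. Qed.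
Lemma idN I a : is_ideal I -> I a -> I (- a).
Proof. by move=> HI Ha; rewrite -mulN1r; apply: idMl. Qed.
Lemma idB I a b : is_ideal I -> I a -> I b -> I (a - b).
Proof. by move=> HI Ha Hb; apply: idD => //; apply: idN. Qed.
Lemma id_sum I m n (f : nat -> R) : is_ideal I ->
  (forall i, (m <= i < n)%N -> I (f i)) -> I (\sum_(m <= i < n) f i).
Proof.
move=> HI; elim: n => [|n IH] H; first by rewrite big_geq //; apply: id0.
case: (leqP m n) => hmn; last by rewrite big_geq //; apply: id0.
rewrite big_nat_recr //=; apply: idD => //.
  by apply: IH => i /andP[h1 h2]; apply: H; rewrite h1 ltnS ltnW.
by apply: H; rewrite hmn ltnSn.
Qed.

Lemma prM P a b : is_prime_ideal P -> ~ P a -> ~ P b -> ~ P (a * b).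
Proof. by case=> _ _ H na nb /H [] . Qed.
Lemma prX P a k : is_prime_ideal P -> P (a ^+ k) -> P a.
Proof.
move=> HP; elim: k => [|k IH]; first by rewrite expr0 => h; case: HP => _ /(_ h).
by rewrite exprS => h; case: HP => _ _ /(_ _ _ h) [] // /IH.
Qed.
Lemma pr_prod P m n (f : nat -> R) : is_prime_ideal P ->
  (forall i, (m <= i < n)%N -> ~ P (f i)) -> ~ P (\prod_(m <= i < n) f i).
Proof.
move=> HP; elim: n => [|n IH] H; first by rewrite big_geq //; case: HP.
case: (leqP m n) => hmn; last by rewrite big_geq //; case: HP.
rewrite big_nat_recr //=; apply: prM => //.
  by apply: IH => i /andP[h1 h2]; apply: H; rewrite h1 ltnS ltnW.
by apply: H; rewrite hmn ltnSn.
Qed.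
Lemma pr_ideal P : is_prime_ideal P -> is_ideal P. Proof. by case. Qed.

Lemma id_prod I m n (f : nat -> R) j : is_ideal I -> (m <= j < n)%N -> I (f j) ->
  I (\prod_(m <= i < n) f i).
Proof.
move=> HI /andP[h1 h2] Hj; rewrite (@big_cat_nat _ _ _ j) ?(ltnW h2) //= (@big_ltn _ _ _ j) //.
by apply: (idMl _ HI); apply: (idMr _ HI).
Qed.

End Basics.
Section Noeth.
Variable R : comRingType.
Implicit Types (I J : R -> Prop).
Hypothesis HN : noetherian R.

Lemma max_ideal (F : (R -> Prop) -> Prop) I0 :
  (forall I, F I -> is_ideal I) -> F I0 ->
  exists I, F I /\ forall J, F J -> sub I J -> sub J I.
Proof.
move=> Fid F0; apply: NNPP => Hn.
have H : forall I : {I | F I}, exists J : {I | F I},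
    sub (proj1_sig I) (proj1_sig J) /\ exists z, proj1_sig J z /\ ~ proj1_sig I z.
  move=> [I FI] /=; apply: NNPP => H1; apply: Hn; exists I; split => // J FJ sIJ z Jz.
  by apply: NNPP => nIz; apply: H1; exists (exist _ J FJ); split => //; exists z.
pose next := fun I : {I | F I} => proj1_sig (constructive_indefinite_description _ (H I)).
have Hnext : forall I : {I | F I}, sub (proj1_sig I) (proj1_sig (next I)) /\
    exists z, proj1_sig (next I) z /\ ~ proj1_sig I z.
  by move=> I; exact: (proj2_sig (constructive_indefinite_description _ (H I))).
pose s := fun k => proj1_sig (iter k next (exist _ I0 F0)).
have [n Hn'] := HN (I:=s) (fun k => Fid _ (proj2_sig _))
   (fun k => proj1 (Hnext (iter k next (exist _ I0 F0)))).
have [_ [z [h1 h2]]] := Hnext (iter n next (exist _ I0 F0)).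
by apply: h2; have := (Hn' n.+1 (leqnSn n) z).1 h1.
Qed.

Definition span n (g : nat -> R) z := exists c : nat -> R, z = \sum_(0 <= i < n) c i * g i.

Lemma span_ideal n g : is_ideal (span n g).
Proof.
split.
- by exists (fun _ => 0); rewrite big1 // => i _; rewrite mul0r.
- move=> x y [c ->] [d ->]; exists (fun i => c i + d i); rewrite -big_split /=.
  by apply: eq_bigr => i _; rewrite mulrDl.
- move=> a x [c ->]; exists (fun i => a * c i); rewrite mulr_sumr.
  by apply: eq_bigr => i _; rewrite mulrA.
Qed.

Lemma span_gen n g i : (i < n)%N -> span n g (g i).
Proof.
move=> hi; exists (fun j => if j == i then 1 else 0).
rewrite (bigD1_seq i) ?mem_iota ?iota_uniq ?add0n ?subn0 //= eqxx mul1r big1 ?addr0 //.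
by move=> j /negbTE ->; rewrite mul0r.
Qed.

Lemma span_sub I n g : is_ideal I -> (forall i, (i < n)%N -> I (g i)) -> sub (span n g) I.
Proof.
move=> HI Hg z [c ->]; apply: id_sum => // i /andP[_ hi].
by apply: idMl => //; apply: Hg.
Qed.

Lemma ideal_ext I J : (forall z, I z <-> J z) -> is_ideal J -> is_ideal I.
Proof.
move=> E [h0 hD hM]; split; first by apply/E.
- by move=> x y /E hx /E hy; apply/E; apply: hD.
- by move=> a x /E hx; apply/E; apply: hM.
Qed.

Lemma fg I : is_ideal I -> exists n g,
  (forall i, (i < n)%N -> I (g i)) /\ forall z, I z <-> span n g z.
Proof.
move=> HI.
pose F J := exists n g, (forall i, (i < n)%N -> I (g i)) /\ forall z, J z <-> span n g z.
have Fid : forall J, F J -> is_ideal J.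
  by move=> J [n [g [_ E]]]; apply: ideal_ext E _; apply: span_ideal.
have F0 : F (span 0 (fun _ => 0)) by exists 0%N, (fun _ => 0); split.
have [J [[n [g [Hg E]]] Jmax]] := max_ideal Fid F0.
have sIJ : sub I J.
  move=> a Ia; apply: NNPP => nJa.
  pose g' := fun i => if i == n then a else g i.
  have FJ' : F (span n.+1 g').
    exists n.+1, g'; split => // i hi; rewrite /g'; case: eqP => [_|ne]; first done.
    by apply: Hg; rewrite ltn_neqAle; apply/andP; split; [apply/eqP|rewrite -ltnS].
  apply: nJa; apply: (Jmax _ FJ'); last first.
    by have := span_gen g' (ltnSn n); rewrite /g' eqxx.
  move=> z /E [c ->]; exists (fun i => if i == n then 0 else c i).
  rewrite big_nat_recr //= eqxx mul0r addr0; apply: eq_big_nat => i /andP[_ hi].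
  by rewrite /g' (ltn_eqF hi).
exists n, g; split => // z; split; first by move/sIJ/E.
by apply: span_sub.
Qed.

Definition decomp I n (P : nat -> R -> Prop) :=
  (forall i, (i < n)%N -> is_prime_ideal (P i) /\ sub I (P i)) /\
  forall z, (forall i, (i < n)%N -> P i z) -> exists k, I (z ^+ k).

Definition addp I a z := exists u c, I u /\ z = u + c * a.

Lemma addp_ideal I a : is_ideal I -> is_ideal (addp I a).
Proof.
move=> HI; split.
- by exists 0, 0; rewrite mul0r addr0; split => //; apply: id0.
- move=> x y [u [c [Iu ->]]] [v [d [Iv ->]]]; exists (u + v), (c + d); split.
    by apply: idD.
  by rewrite mulrDl addrACA.
- move=> b x [u [c [Iu ->]]]; exists (b * u), (b * c); split; first by apply: idMl.
  by rewrite mulrDr mulrA.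
Qed.

Lemma addp_l I a z : is_ideal I -> I z -> addp I a z.
Proof. by move=> HI Iz; exists z, 0; rewrite mul0r addr0. Qed.
Lemma addp_r I a : is_ideal I -> addp I a a.
Proof. by move=> HI; exists 0, 1; rewrite mul1r add0r; split => //; apply: id0. Qed.

Lemma decomp_ex I : is_ideal I -> exists n P, decomp I n P.
Proof.
move=> HI; apply: NNPP => Hn.
pose F J := is_ideal J /\ ~ exists n P, decomp J n P.
have [J [[HJ nJ] Jmax]] := max_ideal (F := F) (fun J (h : F J) => proj1 h) (conj HI Hn).
apply: nJ.
case: (classic (J 1)) => J1.
  by exists 0%N, (fun _ _ => True); split => // z _; exists 0%N; rewrite expr0.
case: (classic (is_prime_ideal J)) => pJ.
  exists 1%N, (fun _ => J); split; first by move=> i _; split.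
  by move=> z /(_ 0%N isT) Jz; exists 1%N; rewrite expr1.
have [a [b [Jab [nJa nJb]]]] : exists a b, J (a * b) /\ ~ J a /\ ~ J b.
  apply: NNPP => H; apply: pJ; split => // a b Jab.
  apply: NNPP => /not_or_and [na nb]; apply: H; by exists a, b.
have D : forall c, ~ J c -> exists n P, decomp (addp J c) n P.
  move=> c nJc; apply: NNPP => nD.
  have := Jmax (addp J c) (conj (addp_ideal c HJ) nD) (fun z => addp_l c HJ).
  by move/(_ c (addp_r c HJ)).
have [na [Pa [Pa1 Pa2]]] := D a nJa; have [nb [Pb [Pb1 Pb2]]] := D b nJb.
exists (na + nb)%N, (fun i => if (i < na)%N then Pa i else Pb (i - na)%N); split.
  move=> i hi; case: ifP => h.
    by have [pr s] := Pa1 i h; split => // z Jz; apply: s; apply: addp_l.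
  have hb : (i - na < nb)%N by rewrite ltn_subLR // leqNgt h.
  by have [pr s] := Pb1 _ hb; split => // z Jz; apply: s; apply: addp_l.
move=> z Hz.
have [k1 [u1 [c1 [Ju1 e1]]]] : exists k, addp J a (z ^+ k).
  apply: Pa2 => i hi; have := Hz i; rewrite hi; apply; exact: ltn_addr.
have [k2 [u2 [c2 [Ju2 e2]]]] : exists k, addp J b (z ^+ k).
  apply: Pb2 => i hi; have := Hz (na + i)%N.
  rewrite (_ : (na + i < na)%N = false) ?addKn; last by rewrite ltnNge leq_addr.
  by apply; rewrite ltn_add2l.
exists (k1 + k2)%N; rewrite exprD e1 e2.
have -> : (u1 + c1 * a) * (u2 + c2 * b) = u1 * (u2 + c2 * b) + (c1 * a) * u2 + (c1 * c2) * (a * b).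
  by ring.
apply: idD => //; last by apply: idMl.
by apply: idD => //; [apply: idMr|apply: idMl].
Qed.

Lemma avoid (q : R -> Prop) n (P : nat -> R -> Prop) (S : nat -> Prop) :
  is_prime_ideal q -> (forall i, (i < n)%N -> S i -> ~ sub (P i) q) ->
  (forall i, (i < n)%N -> S i -> is_ideal (P i)) ->
  exists z, (forall i, (i < n)%N -> S i -> P i z) /\ ~ q z.
Proof.
move=> Hq Hns Hid.
have : forall i, exists a, ((i < n)%N -> S i -> P i a) /\ ~ q a.
  move=> i; case: (classic ((i < n)%N /\ S i)) => [[hi si]|h].
    have [a ha] := not_all_ex_not _ _ (Hns i hi si).
    have [h1 h2] := imply_to_and _ _ ha.
    by exists a.
  exists 1; split; first by move=> hi si; case: h.
  by case: Hq.
move/choice_nat => [f Hf]; exists (\prod_(0 <= i < n) f i); split.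
  by move=> i hi si; apply: id_prod (Hid i hi si) _ ((Hf i).1 hi si); rewrite hi.
by apply: pr_prod => // i _; apply: (Hf i).2.
Qed.

Lemma decomp_sub I n P q : decomp I n P -> is_prime_ideal q -> sub I q ->
  exists i, (i < n)%N /\ sub (P i) q.
Proof.
move=> [D1 D2] Hq sIq; apply: NNPP => H.
have [z [Hz nqz]] := avoid (S := fun _ => True) Hq
   (fun i hi _ s => H (ex_intro _ i (conj hi s)))
   (fun i hi _ => pr_ideal (D1 i hi).1).
have [k Ik] := D2 z (fun i hi => Hz i hi Logic.I).
by apply: nqz; exact: (prX Hq (sIq _ Ik)).
Qed.

Lemma fam_min n (P : nat -> R -> Prop) (a : R -> Prop) :
  exists m : R -> Prop, (m = a \/ exists i, (i < n)%N /\ m = P i) /\ sub m a /\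
    forall i, (i < n)%N -> sub (P i) m -> sub m (P i).
Proof.
elim: n a => [|n IH] a; first by exists a; split; [left|split].
have [m [Hm1 [Hm2 Hm3]]] := IH a.
case: (classic (sub (P n) m /\ ~ sub m (P n))) => [[s ns]|h].
  have [m' [Hm1' [Hm2' Hm3']]] := IH (P n).
  exists m'; split.
    right; case: Hm1' => [->|[i [hi ->]]]; first by exists n.
    by exists i; split => //; apply: ltnW.
  split; first by move=> z /Hm2' /s /Hm2.
  move=> i; rewrite ltnS leq_eqVlt => /orP [/eqP ->|hi] //.
  by apply: Hm3'.
exists m; split.
  case: Hm1 => [->|[i [hi ->]]]; first by left.
  by right; exists i; split => //; apply: ltnW.
split => // i; rewrite ltnS leq_eqVlt => /orP [/eqP ->|hi]; last by apply: Hm3.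
by move=> s; apply: NNPP => ns; apply: h.
Qed.

End Noeth.
Section Loc.
Variable R : comRingType.
Implicit Types (I J X Y : R -> Prop).

Definition Lr (m X : R -> Prop) z := exists s, ~ m s /\ X (s * z).
Definition sat (m X : R -> Prop) := forall s z, ~ m s -> X (s * z) -> X z.
Definition sumI X Y z := exists a b, X a /\ Y b /\ z = a + b.
Definition desc (K : nat -> R -> Prop) := forall n, sub (K n.+1) (K n).
Definition EC (K : nat -> R -> Prop) := exists N, forall n, (N <= n)%N -> sub (K N) (K n).

Lemma Lr_ideal m X : is_prime_ideal m -> is_ideal X -> is_ideal (Lr m X).
Proof.
move=> Hm HX; split.
- by exists 1; split; [case: Hm|rewrite mulr0; apply: id0].
- move=> a b [s [ns Xa]] [t [nt Xb]]; exists (s * t); split; first exact: prM.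
  rewrite mulrDr; apply: idD => //.
    by rewrite mulrAC; apply: idMr.
  by rewrite -mulrA; apply: idMl.
- move=> c a [s [ns Xa]]; exists s; split => //.
  by rewrite mulrCA; apply: idMl.
Qed.

Lemma Lr_in m X z : is_prime_ideal m -> X z -> Lr m X z.
Proof. by move=> Hm Xz; exists 1; rewrite mul1r; split => //; case: Hm. Qed.

Lemma Lr_sat m X : is_prime_ideal m -> sat m (Lr m X).
Proof.
move=> Hm s z ns [t [nt Xz]]; exists (t * s); split; first exact: prM.
by rewrite -mulrA.
Qed.

Lemma sat_Lr m X z : sat m X -> Lr m X z -> X z.
Proof. by move=> S [s [ns Xz]]; apply: S Xz. Qed.

Lemma sumI_ideal X Y : is_ideal X -> is_ideal Y -> is_ideal (sumI X Y).
Proof.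
move=> HX HY; split.
- by exists 0, 0; rewrite addr0; split; [apply: id0|split => //; apply: id0].
- move=> u v [a [b [Xa [Yb ->]]]] [c [d [Xc [Yd ->]]]]; exists (a + c), (b + d).
  by split; [apply: idD|split; [apply: idD|rewrite addrACA]].
- move=> c u [a [b [Xa [Yb ->]]]]; exists (c * a), (c * b).
  by split; [apply: idMl|split; [apply: idMl|rewrite mulrDr]].
Qed.

Lemma desc_le K n m : desc K -> (n <= m)%N -> sub (K m) (K n).
Proof.
move=> D; elim: m => [|m IH]; first by rewrite leqn0 => /eqP ->.
rewrite leq_eqVlt => /orP [/eqP ->|]; first by [].
by rewrite ltnS => /IH h z /D /h.
Qed.

Lemma EC_from K : desc K ->
  (forall sg : nat -> nat, (forall k, (sg k <= sg k.+1)%N) -> forall v : nat -> R,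
     (forall k, K (sg k) (v k) /\ ~ K (sg k.+1) (v k)) -> False) -> EC K.
Proof.
move=> D H; apply: NNPP => nE.
have : forall N, exists w : nat * R, (N <= w.1)%N /\ K N w.2 /\ ~ K w.1 w.2.
  move=> N; apply: NNPP => h; apply: nE; exists N => n hn z Kz.
  by apply: NNPP => nK; apply: h; exists (n, z).
move/choice_nat => [f Hf].
pose sg k := iter k (fun N => (f N).1) 0%N.
apply: (H sg (fun k => (Hf (sg k)).1) (fun k => (f (sg k)).2)) => k.
by have [_ [h1 h2]] := Hf (sg k); split.
Qed.

End Loc.
Section Vec.
Variable R : comRingType.
Hypothesis HN : noetherian R.
Variable r : R -> Prop.
Hypothesis Hr : is_prime_ideal r.

Lemma vec_nostrict (B B' : R -> Prop) (K : nat -> R -> Prop) (v : nat -> R) :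
  is_ideal B -> sat r B -> (forall y z, r y -> B' z -> B (y * z)) ->
  (forall n, is_ideal (K n) /\ sat r (K n) /\ sub B (K n) /\ sub (K n) B') ->
  desc K -> (forall n, K n (v n) /\ ~ K n.+1 (v n)) -> False.
Proof.
move=> HB SB HBB' HK DK Hv.
pose W n z := exists s b (c : nat -> R), ~ r s /\ B b /\
  s * z = b + \sum_(0 <= i < n) c i * v i.
have HW : forall n, is_ideal (W n).
  move=> n; split.
  - exists 1, 0, (fun _ => 0); split; first by case: Hr.
    split; first exact: id0.
    by rewrite mulr0 add0r big1 // => i _; rewrite mul0r.
  - move=> a b' [s [b [c [ns [Bb e1]]]]] [t [d [e [nt [Bd e2]]]]].
    exists (s * t), (t * b + s * d), (fun i => t * c i + s * e i); split; first exact: prM.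
    split; first by apply: (idD HB); apply: (idMl _ HB).
    have -> : s * t * (a + b') = t * (s * a) + s * (t * b') by ring.
    rewrite e1 e2 !mulrDr !mulr_sumr addrACA -big_split /=; congr (_ + _).
    by apply: eq_bigr => i _; ring.
  - move=> c0 a [s [b [c [ns [Bb e1]]]]].
    exists s, (c0 * b), (fun i => c0 * c i); split => //; split; first by apply: (idMl _ HB).
    have -> : s * (c0 * a) = c0 * (s * a) by ring.
    rewrite e1 mulrDr mulr_sumr; congr (_ + _); apply: eq_bigr => i _; ring.
have Hasc : forall n z, W n z -> W n.+1 z.
  move=> n z [s [b [c [ns [Bb e1]]]]].
  exists s, b, (fun i => if (i < n)%N then c i else 0); split => //; split => //.
  rewrite e1 big_nat_recr //= ltnn mul0r addr0; congr (_ + _).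
  by apply: eq_big_nat => i /andP[_ ->].
have [N HNW] := HN HW Hasc.
have WvN : W N (v N).
  apply/(HNW N.+1 (leqnSn N)).
  exists 1, 0, (fun i => if i == N then 1 else 0); split; first by case: Hr.
  split; first exact: id0.
  rewrite mul1r add0r big_nat_recr //= eqxx mul1r big1_seq ?add0r // => i.
  by rewrite mem_index_iota => /andP[_ /ltn_eqF ->]; rewrite mul0r.
have [s [b [c [ns [Bb e]]]]] := WvN.
have Kle : forall n m z, (n <= m)%N -> K m z -> K n z.
  by move=> n m z h; apply: desc_le.
have claim : forall j, (j <= N)%N -> B (\sum_(0 <= i < j) c i * v i).
  elim => [|j IH] hj; first by rewrite big_geq //; apply: id0.
  rewrite big_nat_recr //=; apply: idD => //; first by apply: IH; apply: ltnW.
  case: (classic (r (c j))) => rc.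
    by apply: HBB' rc _; have [_ [_ [_ h]]] := HK j; apply: h; exact: (Hv j).1.
  exfalso; apply: (Hv j).2.
  have [HKi [SK [BK KB]]] := HK j.+1.
  apply: (SK (c j)) => //.
  have E : \sum_(0 <= i < N) c i * v i = \sum_(0 <= i < j) c i * v i +
     (c j * v j + \sum_(j.+1 <= i < N) c i * v i).
    by rewrite (@big_cat_nat _ _ _ j) ?(ltnW hj) //= (@big_ltn _ _ _ j).
  have -> : c j * v j = s * v N - b - \sum_(0 <= i < j) c i * v i -
       \sum_(j.+1 <= i < N) c i * v i by rewrite e E; ring.
  apply: (idB HKi); last first.
    apply: id_sum => // i /andP[h1 h2]; apply: (idMl _ HKi); exact: (Kle _ _ _ h1 (Hv i).1).
  apply: (idB HKi); last by apply: BK; apply: IH; apply: ltnW.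
  apply: (idB HKi); last by apply: BK.
  by apply: (idMl _ HKi); exact: (Kle _ _ _ hj (Hv N).1).
apply: (Hv N).2; have [_ [_ [BK _]]] := HK N.+1; apply: BK.
by apply: (SB s) => //; rewrite e; apply: idD => //; apply: claim.
Qed.

End Vec.
Lemma and_ideal (R : comRingType) (X Y : R -> Prop) : is_ideal X -> is_ideal Y ->
  is_ideal (fun z => X z /\ Y z).
Proof.
move=> HX HY; split; first by split; apply: id0.
- by move=> a b [Xa Ya] [Xb Yb]; split; apply: idD.
- by move=> c a [Xa Ya]; split; apply: idMl.
Qed.

Section Art.
Variable R : comRingType.
Hypothesis HN : noetherian R.
Variables (p r : R -> Prop) (x : R).
Hypotheses (Hp : is_prime_ideal p) (Hr : is_prime_ideal r) (spr : sub p r) (rx : r x).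
Hypothesis rmin : forall P, is_prime_ideal P -> sub p P -> P x -> sub P r -> sub r P.

Definition Bx := Lr r (addp p x).
Fixpoint Bc i : R -> Prop :=
  match i with 0 => Bx | i.+1 => fun z => forall y, r y -> Bc i (y * z) end.

Lemma Bx_ideal : is_ideal Bx.
Proof. by apply: Lr_ideal => //; apply: addp_ideal; case: Hp. Qed.

Lemma Bc_ideal i : is_ideal (Bc i).
Proof.
elim: i => [|i IH] /=; first exact: Bx_ideal.
split.
- by move=> y _; rewrite mulr0; apply: id0 IH.
- by move=> a b Ha Hb y ry; rewrite mulrDr; apply: (idD IH); [apply: Ha|apply: Hb].
- by move=> c a Ha y ry; rewrite mulrCA; apply: (idMl _ IH); apply: Ha.
Qed.

Lemma Bc_sat i : sat r (Bc i).
Proof.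
elim: i => [|i IH] /=; first exact: Lr_sat.
move=> s z ns H y ry; apply: (IH s) => //; rewrite mulrCA; exact: H.
Qed.

Lemma Bc_asc i : sub (Bc i) (Bc i.+1).
Proof.
elim: i => [|i IH] /=; first by move=> z Hz y _; apply: idMl => //; exact: Bx_ideal.
by move=> z Hz y ry; apply: IH; apply: Hz.
Qed.

Lemma Bx_Bc i : sub Bx (Bc i).
Proof. elim: i => [|i IH] //= z /IH; exact: Bc_asc. Qed.

Lemma ass (A : R -> Prop) : is_ideal A -> sat r A -> sub (addp p x) A -> ~ A 1 ->
  exists a, ~ A a /\ forall y, r y -> A (y * a).
Proof.
move=> HA SA pxA nA1.
pose F J := exists a, ~ A a /\ forall z, J z <-> A (z * a).
have colon_ideal : forall a, is_ideal (fun z => A (z * a)).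
  move=> a; split; first by rewrite mul0r; apply: id0.
  - by move=> u v Hu Hv; rewrite mulrDl; apply: idD.
  - by move=> c u Hu; rewrite -mulrA; apply: idMl.
have Fid : forall J, F J -> is_ideal J.
  by move=> J [a [_ E]]; apply: ideal_ext E _; apply: colon_ideal.
have FA : F A by exists 1; split => // z; rewrite mulr1.
have [J [[a [nAa E]] Jmax]] := max_ideal HN Fid FA.
have pJ : is_prime_ideal J.
  split; first exact: (Fid _ (ex_intro _ a (conj nAa E))).
    by move/E; rewrite mul1r.
  move=> b c /E Hbc; apply: NNPP => /not_or_and [nb nc]; apply: nc.
  have nAba : ~ A (b * a) by move=> h; apply: nb; apply/E.
  have FJ' : F (fun z => A (z * (b * a))) by exists (b * a); split.
  apply: (Jmax _ FJ'); last by rewrite mulrA [c * b]mulrC.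
  by move=> z /E Hz; rewrite mulrA [z * b]mulrC -mulrA; apply: idMl.
have sJr : sub J r.
  move=> z /E Hz; apply: NNPP => nz; apply: nAa; exact: (SA z).
have srJ := rmin pJ (fun z pz => proj2 (E z) (idMr _ HA (pxA _ (addp_l _ (pr_ideal Hp) pz))))
   (proj2 (E x) (idMr _ HA (pxA _ (addp_r _ (pr_ideal Hp))))) sJr.
by exists a; split => // y /srJ /E.
Qed.

Lemma Bc_full : exists K, forall z, Bc K z.
Proof.
have [K HK] := HN (I := Bc) Bc_ideal Bc_asc.
exists K; apply: NNPP => /not_all_ex_not [z nz].
have nB1 : ~ Bc K 1 by move=> h; apply: nz; rewrite -[z]mulr1; apply: idMl => //; exact: Bc_ideal.
have [a [na Ha]] := ass (Bc_ideal K) (@Bc_sat K)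
  (fun z h => @Bx_Bc K z (Lr_in Hr h)) nB1.
by apply: na; apply/(HK K.+1 (leqnSn K)).
Qed.

Lemma EC_art (J : nat -> R -> Prop) :
  (forall n, is_ideal (J n) /\ sat r (J n) /\ sub Bx (J n)) -> desc J -> EC J.
Proof.
move=> HJ DJ; have [K HK] := Bc_full.
suff : forall i, EC (fun n z => J n z /\ Bc i z).
  by move/(_ K) => [N H]; exists N => n hn z Jz; exact: (H n hn z (conj Jz (HK z))).1.
elim => [|i [N1 H1]].
  by exists 0%N => n _ z [Jz Bz]; split => //; have [_ [_ h]] := HJ n; apply: h.
pose Kk n := Lr r (sumI (fun z => J n z /\ Bc i.+1 z) (Bc i)).
have HKk : forall n, is_ideal (Kk n) /\ sat r (Kk n) /\ sub (Bc i) (Kk n) /\ sub (Kk n) (Bc i.+1).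
  move=> n; have [HJn [SJn _]] := HJ n; split.
    by apply: Lr_ideal => //; apply: sumI_ideal; [apply: and_ideal => //; exact: Bc_ideal|exact: Bc_ideal].
  split; first exact: Lr_sat.
  split.
    move=> z Bz; apply: Lr_in => //; exists 0, z; rewrite add0r; split => //.
    by split; apply: id0 => //; exact: Bc_ideal.
  move=> z Kz; apply: (sat_Lr (@Bc_sat i.+1)); move: Kz => [s [ns [a [b [[_ Ba] [Bb e]]]]]].
  by exists s; split => //; rewrite e; apply: (idD (Bc_ideal i.+1)) => //; apply: Bc_asc.
have DKk : desc Kk.
  move=> n z [s [ns [a [b [[Ja Ba] [Bb e]]]]]]; exists s; split => //.
  by exists a, b; split => //; split => //; apply: DJ.
have [N2 H2] : EC Kk.
  apply: EC_from => // sg hsg v hv.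
  apply: (vec_nostrict HN Hr (B := Bc i) (B' := Bc i.+1) (K := fun k => Kk (sg k)) (v := v)).
  - exact: Bc_ideal.
  - exact: (@Bc_sat i).
  - by move=> y z ry Bz; apply: Bz.
  - by move=> n; apply: HKk.
  - by move=> k; apply: desc_le.
  - exact: hv.
exists (maxn N1 N2) => n hn z [Jz Bz]; split => //.
have hn1 : (N1 <= n)%N by apply: leq_trans hn; apply: leq_maxl.
have hn2 : (N2 <= n)%N by apply: leq_trans hn; apply: leq_maxr.
have [HJN [SJN _]] := HJ (maxn N1 N2); have [HJn [SJn _]] := HJ n.
have : Kk n z.
  apply: H2 hn2 _ _; apply: (desc_le DKk (leq_maxr N1 N2)).
  apply: Lr_in => //; exists z, 0; rewrite addr0; split => //.
  by split; [apply: id0; exact: Bc_ideal|].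
move=> [s [ns [a [b [[Ja Ba] [Bb e]]]]]].
have JNb : J (maxn N1 N2) b.
  have -> : b = s * z - a by rewrite e; ring.
  apply: idB => //; first by apply: idMl.
  exact: (desc_le DJ hn).
have JN1b : J N1 b := desc_le DJ (leq_maxl N1 N2) JNb.
have [Jnb _] := H1 n hn1 b (conj JN1b Bb).
apply: (SJn s) => //; rewrite e; exact: idD.
Qed.

End Art.
Section Nak.
Variable R : comRingType.

Definition JM (N J : R -> Prop) n (g : nat -> R) z :=
  exists a (c : nat -> R), N a /\ (forall j, J (c j)) /\ z = a + \sum_(0 <= j < n) c j * g j.

Lemma JM_ideal N J n g : is_ideal N -> is_ideal J -> is_ideal (JM N J n g).
Proof.
move=> HN HJ; split.
- exists 0, (fun _ => 0); split; first exact: id0.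
  split; first by move=> _; apply: id0.
  by rewrite add0r big1 // => j _; rewrite mul0r.
- move=> u v [a [c [Na [Jc ->]]]] [b [d [Nb [Jd ->]]]].
  exists (a + b), (fun j => c j + d j); split; first exact: idD.
  split; first by move=> j; apply: idD.
  rewrite addrACA -big_split /=; congr (_ + _); apply: eq_bigr => j _; ring.
- move=> e u [a [c [Na [Jc ->]]]]; exists (e * a), (fun j => e * c j).
  split; first exact: idMl.
  split; first by move=> j; apply: idMl.
  rewrite mulrDr mulr_sumr; congr (_ + _); apply: eq_bigr => j _; ring.
Qed.

Lemma nakayama (m J N : R -> Prop) n (g : nat -> R) :
  is_prime_ideal m -> is_ideal J -> sub J m -> is_ideal N ->
  (forall i, (i < n)%N -> Lr m (JM N J n g) (g i)) ->
  forall i, (i < n)%N -> Lr m N (g i).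
Proof.
move=> Hm HJ sJm HNi; elim: n => [|n IH] H i hi //.
have HL : is_ideal (Lr m N) by apply: Lr_ideal.
have [t [nt [a [c [Na [Jc e]]]]]] := H n (ltnSn n).
rewrite big_nat_recr //= in e.
set S := \sum_(0 <= j < n) c j * g j in e.
pose u := t - c n.
have nu : ~ m u.
  move=> mu; apply: nt; have -> : t = u + c n by rewrite /u; ring.
  by apply: idD (pr_ideal Hm) mu (sJm _ (Jc n)).
have E1 : u * g n = a + S by rewrite /u mulrBl e; ring.
have IHn : forall i, (i < n)%N -> Lr m N (g i).
  apply: IH => i' hi'.
  have [t' [nt' [a' [c' [Na' [Jc' e']]]]]] := H i' (ltnW hi').
  rewrite big_nat_recr //= in e'.
  set S' := \sum_(0 <= j < n) c' j * g j in e'.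
  exists (u * t'); split; first exact: prM.
  exists (u * a' + c' n * a), (fun j => u * c' j + c' n * c j); split.
    by apply: (idD HNi); apply: (idMl _ HNi).
  split; first by move=> j; apply: (idD HJ); apply: (idMl _ HJ).
  have -> : u * t' * g i' = u * (t' * g i') by ring.
  rewrite e' (_ : u * (a' + (S' + c' n * g n)) = u * a' + u * S' + c' n * (u * g n)); last by ring.
  rewrite E1 /S /S' !mulr_sumr.
  have -> : forall A B C D : R, A + B + C * (D + (\sum_(0 <= j < n) c j * g j)) =
     A + C * D + (B + \sum_(0 <= j < n) C * (c j * g j)).
    by move=> A B C D; rewrite -mulr_sumr; ring.
  rewrite -big_split /=; congr (_ + _); apply: eq_bigr => j _; ring.
move: hi; rewrite ltnS leq_eqVlt => /orP [/eqP ->|hi]; last exact: IHn.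

apply: (Lr_sat Hm nu); rewrite E1; apply: (idD HL); first exact: Lr_in.
apply: (id_sum HL) => j /andP[_ hj]; apply: (idMl _ HL); exact: IHn.
Qed.

End Nak.
Section PIT.
Variable R : comRingType.
Hypothesis HN : noetherian R.
Variables (p r Q : R -> Prop) (x : R).
Hypotheses (Hp : is_prime_ideal p) (Hr : is_prime_ideal r) (HQ : is_prime_ideal Q).
Hypotheses (spQ : sub p Q) (sQr : sub Q r) (rx : r x) (nQx : ~ Q x).
Hypothesis rmin : forall P, is_prime_ideal P -> sub p P -> P x -> sub P r -> sub r P.

Fixpoint pw n : R -> Prop :=
  match n with
  | 0 => fun _ => True
  | n.+1 => fun z => forall I, is_ideal I -> sub p I ->
       (forall a b, Q a -> pw n b -> I (a * b)) -> I z
  end.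

Lemma pw_ideal n : is_ideal (pw n).
Proof.
case: n => [|n] /=; first by split.
split.
- by move=> I HI _ _; apply: id0.
- by move=> u v Hu Hv I HI sp Hg; apply: idD => //; [apply: Hu|apply: Hv].
- by move=> c u Hu I HI sp Hg; apply: idMl => //; apply: Hu.
Qed.

Lemma pw_p n : sub p (pw n).
Proof. by case: n => [|n] //= z pz I _ sp _; apply: sp. Qed.

Lemma pw_gen n a b : Q a -> pw n b -> pw n.+1 (a * b).
Proof. by move=> Qa Pb I _ _ Hg; apply: Hg. Qed.

Lemma pw_dec n : sub (pw n.+1) (pw n).
Proof.
elim: n => [|n IH] // z Hz.
apply: (Hz (pw n.+1)); [exact: (pw_ideal n.+1)|exact: (@pw_p n.+1)|].
by move=> a b Qa Pb; apply: pw_gen => //; apply: IH.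
Qed.

Lemma pw_X n a : Q a -> pw n (a ^+ n).
Proof.
move=> Qa; elim: n => [|n IH] //; rewrite exprS; exact: pw_gen.
Qed.

Definition Qs n := Lr Q (pw n).

Lemma Qs_ideal n : is_ideal (Qs n).
Proof. by apply: Lr_ideal => //; apply: pw_ideal. Qed.
Lemma Qs_sat n : sat Q (Qs n).
Proof. exact: Lr_sat. Qed.
Lemma Qs_p n : sub p (Qs n).
Proof. by move=> z pz; apply: Lr_in => //; apply: pw_p. Qed.
Lemma Qs_dec n : sub (Qs n.+1) (Qs n).
Proof. by move=> z [s [ns Pz]]; exists s; split => //; apply: pw_dec. Qed.
Lemma Qs_x n c : Qs n (c * x) -> Qs n c.
Proof. by rewrite mulrC => h; apply: (@Qs_sat n x). Qed.

Lemma pit_core : sub Q p.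
Proof.
have spr : sub p r by move=> z /spQ /sQr.
pose C n := Lr r (addp (Qs n) x).
have HC : forall n, is_ideal (C n) /\ sat r (C n) /\ sub (Bx p r x) (C n).
  move=> n; split; first by apply: Lr_ideal => //; apply: addp_ideal; apply: Qs_ideal.
  split; first exact: Lr_sat.
  move=> z [s [ns [u [c [pu e]]]]]; exists s; split => //; exists u, c; split => //.
  exact: Qs_p.
have DC : desc C.
  move=> n z [s [ns [u [c [Qu e]]]]]; exists s; split => //; exists u, c; split => //.
  exact: Qs_dec.
have [N HN'] := EC_art HN Hp Hr rmin HC DC.
have [k [g [Hg E]]] := fg HN (Qs_ideal N).
have Jx : is_ideal (fun z => exists d, z = d * x).
  split; first by exists 0; rewrite mul0r.
  - by move=> a b [d ->] [d' ->]; exists (d + d'); rewrite mulrDl.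
  - by move=> c a [d ->]; exists (c * d); rewrite mulrA.
have sJr : sub (fun z => exists d, z = d * x) r.
  by move=> z [d ->]; apply: idMl => //; case: Hr.
have step1 : forall i, (i < k)%N -> Qs N.+1 (g i).
  have H1 : forall i', (i' < k)%N ->
      Lr r (JM (Qs N.+1) (fun z => exists d, z = d * x) k g) (g i').
    move=> i' hi'.
    have : C N.+1 (g i').
      by apply: (HN' N.+1 (leqnSn N)); apply: Lr_in => //; apply: addp_l;
        [exact: Qs_ideal|exact: Hg].
    move=> [t [nt [b [c [Qb e]]]]]; exists t; split => //.
    have : Qs N (c * x).
      have -> : c * x = t * g i' - b by rewrite e; ring.
      apply: idB; first exact: Qs_ideal.
        by apply: idMl; [exact: Qs_ideal|exact: Hg].
      exact: Qs_dec.
    move=> /Qs_x /E [d ed]; exists b, (fun j => d j * x); split => //.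
    split; first by move=> j; exists (d j).
    rewrite e ed mulr_suml; congr (_ + _); apply: eq_bigr => j _; ring.
  move=> i hi.
  have [s [ns Hs]] := nakayama Hr Jx sJr (Qs_ideal N.+1) H1 hi.
  by apply: (@Qs_sat N.+1 s) => //; move=> /sQr.
have step2 : forall i, (i < k)%N -> p (g i).
  have H2 : forall i', (i' < k)%N -> Lr Q (JM p Q k g) (g i').
    move=> i' hi'; have [s [ns Hs]] := step1 i' hi'; exists s; split => //.
    apply: Hs; first exact: JM_ideal (pr_ideal Hp) (pr_ideal HQ).
      move=> z pz; exists z, (fun _ => 0); split => //; split.
        by move=> _; apply: id0; case: HQ.
      by rewrite big1 ?addr0 // => j _; rewrite mul0r.
    move=> a b Qa Pb; have /E [d ->] : Qs N b by apply: Lr_in.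
    exists 0, (fun j => a * d j); split; first by apply: id0; case: Hp.
    split; first by move=> j; apply: (idMr _ (pr_ideal HQ)).
    by rewrite add0r mulr_sumr; apply: eq_bigr => j _; ring.
  move=> i hi.
  have [s [ns Hs]] := nakayama HQ (pr_ideal HQ) (fun z h => h) (pr_ideal Hp) H2 hi.
  by case: Hp => _ _ /(_ _ _ Hs) [] // /spQ.
move=> a Qa; apply: (prX (k := N) Hp).
have : Qs N (a ^+ N) by apply: Lr_in => //; apply: pw_X.
move=> /E; apply: span_sub; first by case: Hp.
exact: step2.
Qed.

End PIT.
Lemma sum_ge (f : nat -> int) n i : (i < n)%N -> `|f i| <= \sum_(0 <= j < n) `|f j|.
Proof.
elim: n => [|n IH] //; rewrite ltnS leq_eqVlt => /orP [/eqP ->|hi]; rewrite big_nat_recr //=.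
  by rewrite lerDr; apply: sumr_ge0 => j _; apply: normr_ge0.
by apply: (le_trans (IH hi)); rewrite lerDl normr_ge0.
Qed.

Section Main.
Variable R : comRingType.
Hypothesis HN : noetherian R.

Lemma sat_step (p q : Spec R) : prime_lt p q ->
  exists r : Spec R, prime_lt p r /\ prime_le r q /\
    forall s : Spec R, ~ (prime_lt p s /\ prime_lt s r).
Proof.
case: p => P Hp; case: q => Qq Hq; rewrite /prime_lt /prime_le /=.
move=> [sPQ [x [Qx nPx]]].
have HI : is_ideal (addp P x) by apply: addp_ideal; case: Hp.
have [n [Pf [D1 D2]]] := decomp_ex HN HI.
have sIQ : sub (addp P x) Qq.
  move=> z [u [c [Pu ->]]]; apply: (idD (pr_ideal Hq)); first exact: sPQ.
  exact: (idMl _ (pr_ideal Hq) Qx).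
have [i0 [hi0 si0]] := decomp_sub (conj D1 D2) Hq sIQ.
have [m [Hm1 [Hm2 Hm3]]] := fam_min n Pf (Pf i0).
have [j [hj Em]] : exists j, (j < n)%N /\ m = Pf j.
  by case: Hm1 => [->|[j [hj ->]]]; [exists i0|exists j].
subst m.
have [prj sIj] := D1 j hj.
have rmin : forall P', is_prime_ideal P' -> sub P P' -> P' x -> sub P' (Pf j) -> sub (Pf j) P'.
  move=> P' HP' sPP' P'x sP'j.
  have sIP' : sub (addp P x) P'.
    move=> z [u [c [Pu ->]]]; apply: (idD (pr_ideal HP')); first exact: sPP'.
    exact: (idMl _ (pr_ideal HP') P'x).
  have [l [hl sl]] := decomp_sub (conj D1 D2) HP' sIP'.
  by move=> z /(Hm3 l hl (fun w h => sP'j _ (sl _ h))) /sl.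
exists (exist _ (Pf j) prj); rewrite /=; split.
  split; first by move=> z Pz; apply: sIj; apply: addp_l => //; case: Hp.
  by exists x; split => //; apply: sIj; apply: addp_r; case: Hp.
split; first by move=> z /Hm2 /si0.
move=> [S HS]; rewrite /prime_lt /prime_le /= => [[[sPS [y [Sy nPy]]] [sSj [y' [jy' nSy']]]]].
have nSx : ~ S x by move=> Sx; apply: nSy'; apply: (rmin S HS sPS Sx sSj).
apply: nPy; exact: (pit_core HN Hp prj HS sPS sSj (sIj _ (addp_r _ (pr_ideal Hp))) nSx rmin Sy).
Qed.

Lemma max_prime (F : Spec R -> Prop) p0 : F p0 ->
  exists p, F p /\ forall p', F p' -> prime_le p p' -> prime_le p' p.
Proof.
case: p0 => P0 pf0 F0.
pose G I := exists pf : is_prime_ideal I, F (exist _ I pf).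
have Gid : forall I, G I -> is_ideal I by move=> I [pf _]; exact: pr_ideal.
have [I [[pf FI] Imax]] := max_ideal HN Gid (ex_intro _ pf0 F0).
exists (exist _ I pf); split => // [[I' pf']] F' le.
by apply: (Imax I') => //; exists pf'.
Qed.

Lemma gen_closed (X : Spec R -> Prop) :
  (forall p q, X p -> prime_le p q -> X q) ->
  (forall p q, prime_lt p q -> (forall s, ~ (prime_lt p s /\ prime_lt s q)) -> X q -> X p) ->
  forall p q, prime_le p q -> X q -> X p.
Proof.
move=> Hsp Hgen p0 q le0 Xq; apply: NNPP => nX0.
have [p [[lep [lpq nXp]] pmax]] :=
  max_prime (F := fun p => prime_le p0 p /\ prime_le p q /\ ~ X p)
    (conj (fun z h => h) (conj le0 nX0)).
case: (classic (prime_le q p)) => hqp; first by apply: nXp; exact: (Hsp _ _ Xq hqp).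
have ltpq : prime_lt p q.
  split => //; have [z hz] := not_all_ex_not _ _ hqp.
  by have [h1 h2] := imply_to_and _ _ hz; exists z.
have [r [ltpr [lerq satr]]] := sat_step ltpq.
have Xr : X r.
  apply: NNPP => nXr.
  have := pmax r (conj (fun z h => ltpr.1 _ (lep _ h)) (conj lerq nXr)) ltpr.1.
  by have [_ [y [ry npy]]] := ltpr => /(_ y ry).
by apply: nXp; apply: Hgen ltpr satr Xr.
Qed.

Definition V0 := fun z : R => z = 0.
Lemma V0_ideal : is_ideal V0.
Proof.
split; first by [].
- by move=> a b -> ->; rewrite addr0.
- by move=> c a ->; rewrite mulr0.
Qed.

Lemma V0_sub (q : Spec R) : sub V0 (proj1_sig q).
Proof. move=> z; rewrite /V0 => ->; by case: (proj2_sig q) => [[h0 _ _] _ _]. Qed.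

Lemma all_or_nothing (X : Spec R -> Prop) : spec_connected R ->
  (forall p q, X p -> prime_le p q -> X q) ->
  (forall p q, prime_le p q -> X q -> X p) ->
  (forall p, X p) \/ (forall p, ~ X p).
Proof.
move=> Hc Hsp Hgen.
have [n [Pf [D1 D2]]] := decomp_ex HN V0_ideal.
have cov : forall q : Spec R, exists i, (i < n)%N /\ sub (Pf i) (proj1_sig q).
  by move=> q; apply: decomp_sub (conj D1 D2) (proj2_sig q) (@V0_sub q).
pose inX i := exists pf : is_prime_ideal (Pf i), X (exist _ (Pf i) pf).
pose IX z := forall i, (i < n)%N -> inX i -> Pf i z.
pose JX z := forall i, (i < n)%N -> ~ inX i -> Pf i z.
have int_ideal : forall S : nat -> Prop, is_ideal (fun z => forall i, (i < n)%N -> S i -> Pf i z).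
  move=> S; split.
  - by move=> i hi _; apply: id0; exact: (pr_ideal (D1 i hi).1).
  - by move=> a b Ha Hb i hi si; apply: (idD (pr_ideal (D1 i hi).1)); [apply: Ha|apply: Hb].
  - by move=> c a Ha i hi si; apply: (idMl _ (pr_ideal (D1 i hi).1)); apply: Ha.
have inX_sp : forall i (q : Spec R), (i < n)%N -> inX i -> sub (Pf i) (proj1_sig q) -> X q.
  by move=> i q hi [pf Xi] s; apply: Hsp Xi _.
have inX_gen : forall i (q : Spec R), (i < n)%N -> X q -> sub (Pf i) (proj1_sig q) -> inX i.
  move=> i q hi Xq s; exists (D1 i hi).1; apply: (Hgen _ q) => //.
have VI : forall q : Spec R, V IX q <-> X q.
  move=> q; split => [HV|Xq z Iz].
    apply: NNPP => nXq.
    have [z [Hz nqz]] := avoid (S := inX) (proj2_sig q)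
      (fun i hi si s => nXq (inX_sp i q hi si s)) (fun i hi _ => pr_ideal (D1 i hi).1).
    by apply: nqz; apply: HV.
  have [i [hi s]] := cov q; apply: (s z); apply: Iz => //; exact: (inX_gen i q hi Xq s).
have VJ : forall q : Spec R, V JX q <-> ~ X q.
  move=> q; split => [HV Xq|nXq z Jz].
    have [z [Hz nqz]] := avoid (S := fun i => ~ inX i) (proj2_sig q)
      (fun i hi si s => si (inX_gen i q hi Xq s)) (fun i hi _ => pr_ideal (D1 i hi).1).
    by apply: nqz; apply: HV.
  have [i [hi s]] := cov q; apply: (s z); apply: Jz => // Xi; apply: nXq; exact: (inX_sp i q hi Xi s).
have := Hc IX JX (int_ideal _) (int_ideal _).
case.
- move=> q; case: (classic (X q)) => h; [left; apply/VI|right; apply/VJ] => //.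
- by move=> q [/VI h1 /VJ h2].
- by move=> H; right => q /VI /H.
- by move=> H; left => q; apply: NNPP => /VJ /H.
Qed.

End Main.
Lemma chain_lem (R : comRingType) (HN : noetherian R) (phi : int -> Spec R -> Prop) :
  sp_filtration phi -> weak_cousin phi ->
  forall (q : Spec R) j, phi j q -> forall p, prime_le p q ->
  exists m (c : nat -> Spec R), c 0%N = p /\
    (forall k, (k < m)%N -> prime_lt (c k) (c k.+1)) /\ phi (j - m%:Z) p.
Proof.
move=> [Hsp Hdec] Hwc q j Hq p0 le0.
apply: NNPP => nG.
pose G p := exists m (c : nat -> Spec R), c 0%N = p /\
    (forall k, (k < m)%N -> prime_lt (c k) (c k.+1)) /\ phi (j - m%:Z) p.
have [p [[lepq nGp] pmax]] :=
  max_prime HN (F := fun p => prime_le p q /\ ~ G p) (conj le0 nG).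
case: (classic (prime_le q p)) => hqp.
  apply: nGp; exists 0%N, (fun _ => p); split => //; split => //.
  by rewrite subr0; apply: (Hsp j q p Hq hqp).
have ltpq : prime_lt p q.
  split => //; have [z hz] := not_all_ex_not _ _ hqp.
  by have [h1 h2] := imply_to_and _ _ hz; exists z.
have [r [ltpr [lerq satr]]] := sat_step HN ltpq.
have [m [c [c0 [Hc Hphi]]]] : G r.
  apply: NNPP => nGr; have := pmax r (conj lerq nGr) ltpr.1.
  by have [_ [y [ry npy]]] := ltpr => /(_ y ry).
apply: nGp; exists m.+1, (fun k => if k is k'.+1 then c k' else p); split => //; split.
  by case => [|k] hk /=; [rewrite c0 | apply: Hc].
have := Hwc (j - m%:Z) p r ltpr satr Hphi.
have -> : j - (m.+1)%:Z = j - m%:Z - 1 by rewrite -addn1 PoszD opprD addrA.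
done.
Qed.

Unset Implicit Arguments.
Set Strict Implicit.

Theorem corollary4p10 (R : comRingType) (phi : int -> Spec R -> Prop) :
  noetherian R -> spec_connected R ->
  sp_filtration phi -> weak_cousin phi ->
  ~ (forall i p, ~ phi i p) ->
  ~ (forall i p, phi i p) ->
  [/\ (forall p : Spec R, exists i, ~ phi i p),
      (exists j0 : int, forall p, phi j0 p)
    & (finite_krull_dim R -> exists k : int, forall p, ~ phi k p)].
Proof.
move=> HN Hc Hf Hwc Hne Hnf.
have [Hsp Hdec] := Hf.
have [n [Pf [D1 D2]]] := decomp_ex HN (@V0_ideal R).
have cov : forall q : Spec R, exists i, (i < n)%N /\ sub (Pf i) (proj1_sig q).
  by move=> q; apply: decomp_sub (conj D1 D2) (proj2_sig q) (@V0_sub R q).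
have H1 : forall p : Spec R, exists i, ~ phi i p.
  have spS : forall p q, (forall i, phi i p) -> prime_le p q -> forall i, phi i q.
    by move=> p q Hp le i; apply: (Hsp i p q).
  have gS := gen_closed HN spS (fun p q lt st Hq i =>
     eq_ind _ (fun k => phi k p) (Hwc (i + 1) p q lt st (Hq (i + 1))) _ (addrK 1 i)).
  case: (all_or_nothing HN Hc spS gS) => [Hall|Hnone].
    by exfalso; apply: Hnf => i p; apply: Hall.
  move=> p; apply: NNPP => h; apply: (Hnone p) => i; apply: NNPP => nh; apply: h.
  by exists i.
have Hpr : forall i, (i < n)%N -> is_prime_ideal (Pf i) by move=> i hi; exact: (D1 i hi).1.
have sprefl : forall i (pf pf' : is_prime_ideal (Pf i)),
    prime_le (exist _ (Pf i) pf) (exist _ (Pf i) pf') by move=> i pf pf' z.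
split => //.
- have spT : forall p q, (exists i, phi i p) -> prime_le p q -> exists i, phi i q.
    by move=> p q [i Hp] le; exists i; apply: (Hsp i p q).
  have gT : forall p q, prime_lt p q -> (forall s, ~ (prime_lt p s /\ prime_lt s q)) ->
      (exists i, phi i q) -> exists i, phi i p.
    by move=> p q lt st [i Hq]; exists (i - 1); apply: Hwc lt st Hq.
  have AllT : forall p, exists i, phi i p.
    case: (all_or_nothing HN Hc spT (gen_closed HN spT gT)) => // Hnone.
    by exfalso; apply: Hne => i p h; apply: (Hnone p); exists i.
  have : forall i, exists k : int, (i < n)%N ->
      forall pf, phi k (exist _ (Pf i) pf).
    move=> i; case: (classic (i < n)%N) => hi; last by exists 0.
    have [k Hk] := AllT (exist _ (Pf i) (Hpr i hi)).
    by exists k => _ pf; apply: (Hsp k _ _ Hk); apply: sprefl.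
  move/choice_nat => [kf Hkf].
  exists (- \sum_(0 <= i < n) `|kf i|) => q.
  have [i [hi s]] := cov q.
  apply: (Hdec _ (kf i)).
    have h2 := sum_ge kf hi; have h3 : - kf i <= `|kf i| by rewrite -normrN ler_norm.
    by rewrite lerNl; exact: le_trans h3 h2.
  by apply: (Hsp (kf i) (exist _ (Pf i) (Hpr i hi))) => //; apply: Hkf.
- move=> [n0 Hd].
  have : forall i, exists k : int, (i < n)%N ->
      forall pf, ~ phi k (exist _ (Pf i) pf).
    move=> i; case: (classic (i < n)%N) => hi; last by exists 0.
    have [k Hk] := H1 (exist _ (Pf i) (Hpr i hi)).
    by exists k => _ pf h; apply: Hk; apply: (Hsp k _ _ h); apply: sprefl.
  move/choice_nat => [kf Hkf].
  exists (\sum_(0 <= i < n) `|kf i| + n0%:Z) => q Hq.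
  have [i [hi s]] := cov q.
  have [m [c [c0 [Hch Hph]]]] := chain_lem HN Hf Hwc Hq (p := exist _ (Pf i) (Hpr i hi)) s.
  have hm := Hd m c Hch.
  apply: (Hkf i hi (Hpr i hi)); apply: (Hdec _ _ _ _ Hph).
  have h1 := sum_ge kf hi; have h2 := ler_norm (kf i).
  set S := \sum_(0 <= j < n) `|kf j| in h1 *.
  have h3 : (m%:Z <= n0%:Z) by rewrite lez_nat.
  apply: (le_trans h2); apply: (le_trans h1).
  by rewrite -addrA lerDl subr_ge0.
Qed.
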